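(* Let $\Sigma$ be the set of all groupoid identities satisfied by each of the four binary operations $x+y$, $x-y$, $-x+y$, $-x-y$ in every abelian group. Then the interchange laws that belong to $\Sigma$ form a basis for $\Sigma$.
   Context: A groupoid term is linear if no variable occurs in it more than once. If $p$ is a linear term and $q$ is obtained from $p$ by interchanging (swapping) two of its variables, then the identity $p=q$ is called an interchange law. A basis for $\Sigma$ is a set of identities whose equational consequences are exactly $\Sigma$. *)

(* Defs.v *)
From HB Require Import structures.
From mathcomp Require Import all_boot all_algebra.
Set Implicit Arguments. Unset Strict Implicit. Unset Printing Implicit Defensive.
Import GRing.Theory.
Local Open Scope ring_scope.

Inductive term : Type :=
| Var of nat
| Op of term & term.

Fixpoint vars (t : term) : seq nat :=
  match t with
  | Var v => [:: v]
  | Op t1 t2 => vars t1 ++ vars t2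
  end.

Definition linear_term (t : term) : bool := uniq (vars t).

Fixpoint subst (s : nat -> term) (t : term) : term :=
  match t with
  | Var v => s v
  | Op t1 t2 => Op (subst s t1) (subst s t2)
  end.

Definition swap_var (x y v : nat) : nat :=
  if v == x then y else if v == y then x else v.

Definition swap_term (x y : nat) (t : term) : term :=
  subst (fun v => Var (swap_var x y v)) t.

Definition interchange_law (p q : term) : Prop :=
  exists x y : nat,
    [/\ linear_term p, x \in vars p, y \in vars p, x != y & q = swap_term x y p].

Fixpoint eval (T : Type) (o : T -> T -> T) (f : nat -> T) (t : term) : T :=
  match t with
  | Var v => f v
  | Op t1 t2 => o (eval o f t1) (eval o f t2)
  end.

Inductive sign_op : Type := PP | PM | MP | MM.

Definition abop (G : zmodType) (k : sign_op) : G -> G -> G :=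
  match k with
  | PP => fun x y => x + y
  | PM => fun x y => x - y
  | MP => fun x y => - x + y
  | MM => fun x y => - x - y
  end.

Definition Sigma (p q : term) : Prop :=
  forall (G : zmodType) (k : sign_op) (f : nat -> G),
    eval (abop k) f p = eval (abop k) f q.

Inductive eq_conseq (E : term -> term -> Prop) : term -> term -> Prop :=
| ec_ax p q (s : nat -> term) : E p q -> eq_conseq E (subst s p) (subst s q)
| ec_refl p : eq_conseq E p p
| ec_sym p q : eq_conseq E p q -> eq_conseq E q p
| ec_trans p q r : eq_conseq E p q -> eq_conseq E q r -> eq_conseq E p r
| ec_cong p p' q q' :
    eq_conseq E p p' -> eq_conseq E q q' -> eq_conseq E (Op p q) (Op p' q').

Definition Sigma_interchange (p q : term) : Prop :=
  interchange_law p q /\ Sigma p q.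

Definition is_basis (B S : term -> term -> Prop) : Prop :=
  forall p q, eq_conseq B p q <-> S p q.

(* Main.v *)
From HB Require Import structures.
From mathcomp Require Import all_boot all_algebra.
From mathcomp Require Import zify.
Require Import Defs.
Set Implicit Arguments. Unset Strict Implicit. Unset Printing Implicit Defensive.
Import GRing.Theory Num.Theory.

Local Notation ec := (eq_conseq Sigma_interchange).

Definition cls := (bool * bool)%type.
Definition c00 : cls := (false, false).
Definition shL (c : cls) : cls := (~~ c.1, c.2).
Definition shR (c : cls) : cls := (c.1, ~~ c.2).

Fixpoint occ_c (c : cls) (t : term) : seq (nat * cls) :=
  match t with
  | Var v => [:: (v, c)]
  | Op a b => occ_c (shL c) a ++ occ_c (shR c) b
  end.
Definition occ t := occ_c c00 t.

Lemma eval_subst (G : zmodType) (k : sign_op) (f : nat -> G) s t :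
  eval (abop k) f (subst s t) = eval (abop k) (fun v => eval (abop k) f (s v)) t.
Proof. by elim: t => //= a IHa b IHb; rewrite IHa IHb. Qed.

Lemma soundness p q : ec p q -> Sigma p q.
Proof.
elim=> {p q}.
- move=> p q s [_ H] G k f; rewrite !eval_subst; exact: H.
- by [].
- by move=> p q _ H G k f; rewrite H.
- by move=> p q r _ H1 _ H2 G k f; rewrite H1 H2.
- by move=> p p' q q' _ H1 _ H2 G k f /=; rewrite H1 H2.
Qed.

Definition sgnb (k : sign_op) (c : cls) : bool :=
  match k with PP => false | PM => c.2 | MP => c.1 | MM => c.1 (+) c.2 end.
Definition sgn (G : zmodType) k c (x : G) := if sgnb k c then (- x)%R else x.

Lemma sgnD (G : zmodType) k c (x y : G) : sgn k c (x + y)%R = (sgn k c x + sgn k c y)%R.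
Proof. by rewrite /sgn; case: sgnb; rewrite ?opprD. Qed.

Lemma evalE (G : zmodType) k (f : nat -> G) t c :
  sgn k c (eval (abop k) f t) = (\sum_(o <- occ_c c t) sgn k o.2 (f o.1))%R.
Proof.
elim: t c => [v|a IHa b IHb] c /=; first by rewrite big_seq1.
rewrite big_cat /= -IHa -IHb /sgn.
case: c => [l r] /=; move: IHa IHb => _ _.
by case: k; case: l; case: r => /=; rewrite ?opprD ?opprK // addrC.
Qed.

Lemma data_Sigma p q : perm_eq (occ p) (occ q) -> Sigma p q.
Proof.
move=> H G k f.
have E t : eval (abop k) f t = (\sum_(o <- occ t) sgn k o.2 (f o.1))%R.
  by rewrite -evalE /sgn; case: k.
by rewrite !E (perm_big _ H).
Qed.

Definition ind (v : nat) (w : nat) : int := (w == v)%:R.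

Lemma combo_pt (b : bool) (c c0 : cls) :
  (sgn PP c0 (sgn PP c (b%:R : int)) + sgn PM c0 (sgn PM c b%:R)
   + sgn MP c0 (sgn MP c b%:R) + sgn MM c0 (sgn MM c b%:R))%R
  = (4 * ((b && (c == c0)) : nat)%:R)%R.
Proof.
by case: b; case: c => [l r]; case: c0 => [l0 r0]; case: l; case: r; case: l0; case: r0.
Qed.

Lemma combo_sum v c0 (s : seq (nat * cls)) :
  (sgn PP c0 (\sum_(o <- s) sgn PP o.2 (ind v o.1))
   + sgn PM c0 (\sum_(o <- s) sgn PM o.2 (ind v o.1))
   + sgn MP c0 (\sum_(o <- s) sgn MP o.2 (ind v o.1))
   + sgn MM c0 (\sum_(o <- s) sgn MM o.2 (ind v o.1)))%R
  = (4 * (count_mem (v, c0) s)%:R)%R.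
Proof.
elim: s => [|[w c] s IH]; first by rewrite !big_nil /sgn; case: c0 => [[] []].
rewrite !big_cons !sgnD /=.
have -> : forall a b c d e f g h : int, (a + e + (b + f) + (c + g) + (d + h) = (a + b + c + d) + (e + f + g + h))%R.
  by move=> *; lia.
rewrite IH /ind combo_pt.
have -> : ((w, c) == (v, c0)) = ((w == v) && (c == c0)) by [].
rewrite natrD mulrDr; congr (_ + _)%R.
Qed.

Lemma Sigma_data p q : Sigma p q -> perm_eq (occ p) (occ q).
Proof.
move=> H; apply/allP => [[v c0]] _; apply/eqP.
have E k t : eval (abop k) (ind v) t = (\sum_(o <- occ t) sgn k o.2 (ind v o.1))%R.
  by rewrite -evalE /sgn; case: k.
have := combo_sum v c0 (occ p); rewrite -!E !H !E combo_sum.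
rewrite -!natrM => /eqP; rewrite eqr_nat => /eqP h.
by apply/eqP; rewrite -(eqn_pmul2l (isT : 0 < 4)) h.
Qed.

Fixpoint sub (t : term) (p : seq bool) : term :=
  match p, t with
  | [::], _ => t
  | b :: p', Op l r => sub (if b then r else l) p'
  | _ :: _, Var _ => t
  end.
Fixpoint valid (t : term) (p : seq bool) : bool :=
  match p, t with
  | [::], _ => true
  | b :: p', Op l r => valid (if b then r else l) p'
  | _ :: _, Var _ => false
  end.
Fixpoint repl (t : term) (p : seq bool) (u : term) : term :=
  match p, t with
  | [::], _ => u
  | b :: p', Op l r => if b then Op l (repl r p' u) else Op (repl l p' u) r
  | _ :: _, Var _ => t
  end.
Fixpoint clsf (c : cls) (p : seq bool) : cls :=
  match p with [::] => c | b :: p' => clsf (if b then shR c else shL c) p' end.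

Lemma sub_var v q : sub (Var v) q = Var v.
Proof. by case: q. Qed.

Lemma sub_cat t p q : sub t (p ++ q) = sub (sub t p) q.
Proof. by elim: p t => [|b p IH] [v|l r] //=; move: IH => _; case: q. Qed.

Lemma repl_sub t p : repl t p (sub t p) = t.
Proof. by elim: p t => [|[] p IH] [v|l r] //=; rewrite IH. Qed.

Fixpoint leaves (t : term) (pre : seq bool) : term :=
  match t with
  | Var _ => Var (pickle pre)
  | Op a b => Op (leaves a (rcons pre false)) (leaves b (rcons pre true))
  end.
Fixpoint cut (t : term) (p : seq bool) (pre : seq bool) : term :=
  match p, t with
  | [::], _ => Var (pickle pre)
  | b :: p', Op l r =>
      if b then Op (leaves l (rcons pre false)) (cut r p' (rcons pre true))
      else Op (cut l p' (rcons pre false)) (leaves r (rcons pre true))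
  | _ :: _, Var _ => Var (pickle pre)
  end.

Lemma leaves_subst t pre (g : nat -> term) :
  (forall pi, g (pickle (pre ++ pi)) = sub t pi) -> subst g (leaves t pre) = t.
Proof.
elim: t pre => [v|a IHa b IHb] pre H /=; first by rewrite -(cats0 pre) H.
rewrite IHa ?IHb // => pi; rewrite cat_rcons H //.
Qed.

Lemma cut_subst t p pre (g : nat -> term) W :
  valid t p -> g (pickle (pre ++ p)) = W ->
  (forall pi, pi != p -> g (pickle (pre ++ pi)) = sub t pi) ->
  subst g (cut t p pre) = repl t p W.
Proof.
elim: p t pre => [|b p IH] [v|l r] pre //=; rewrite ?cats0 //.
move=> Hv HW H; case: b Hv HW H => Hv HW H /=.
- rewrite leaves_subst ?IH //.
  + by rewrite cat_rcons.
  + by move=> pi Hpi; rewrite cat_rcons H // eqseq_cons negb_and Hpi orbT.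
  + by move=> pi; rewrite cat_rcons H.
- rewrite leaves_subst ?IH //.
  + by rewrite cat_rcons.
  + by move=> pi Hpi; rewrite cat_rcons H // eqseq_cons negb_and Hpi orbT.
  + by move=> pi; rewrite cat_rcons H.
Qed.

Lemma vars_occ c t : vars t = map fst (occ_c c t).
Proof. by elim: t c => [v|a IHa b IHb] c //=; rewrite map_cat -IHa -IHb. Qed.

Lemma catIs (pre s1 s2 : seq bool) : pre ++ s1 = pre ++ s2 -> s1 = s2.
Proof. by elim: pre => //= b pre IH [] /IH. Qed.

Lemma leaves_vars t pre x : x \in vars (leaves t pre) -> exists pi, x = pickle (pre ++ pi).
Proof.
elim: t pre => [v|a IHa b IHb] pre /=.
  by rewrite inE => /eqP ->; exists [::]; rewrite cats0.
rewrite mem_cat => /orP [/IHa|/IHb] [pi ->]; by eexists; rewrite cat_rcons.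
Qed.

Lemma cut_vars t p pre x : x \in vars (cut t p pre) -> exists pi, x = pickle (pre ++ pi).
Proof.
elim: p t pre => [|b p IH] [v|l r] pre /=;
  try by rewrite inE => /eqP ->; exists [::]; rewrite cats0.
case: b => /=; rewrite mem_cat => /orP [H|H].
- by move/leaves_vars: H => [pi ->]; exists (false :: pi); rewrite cat_rcons.
- by move/IH: H => [pi ->]; exists (true :: pi); rewrite cat_rcons.
- by move/IH: H => [pi ->]; exists (false :: pi); rewrite cat_rcons.
- by move/leaves_vars: H => [pi ->]; exists (true :: pi); rewrite cat_rcons.
Qed.

Lemma pk_inj : injective (fun p : seq bool => pickle p).
Proof. exact: (pcan_inj pickleK). Qed.

Lemma disj_pre (pre : seq bool) x :
  (exists pi, x = pickle (rcons pre false ++ pi)) ->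
  (exists pi, x = pickle (rcons pre true ++ pi)) -> False.
Proof.
move=> [p1 ->] [p2 /pk_inj]; rewrite !cat_rcons => /catIs; by case.
Qed.

Lemma uniq_leaves t pre : uniq (vars (leaves t pre)).
Proof.
elim: t pre => [v|a IHa b IHb] pre //=.
rewrite cat_uniq IHa IHb andbT /=; apply/hasPn => x /leaves_vars H1.
apply/negP => /leaves_vars H2; exact: (disj_pre H2 H1).
Qed.

Lemma uniq_cut t p pre : uniq (vars (cut t p pre)).
Proof.
elim: p t pre => [|b p IH] [v|l r] pre //=.
case: b => /=; rewrite cat_uniq ?IH ?uniq_leaves andbT /=; apply/hasPn => x H1;
  apply/negP => H2.
- move/leaves_vars: H2 => H2; move/cut_vars: H1 => [pi H1].
  by apply: (disj_pre H2); exists pi.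
- move/leaves_vars: H1 => H1; move/cut_vars: H2 => [pi H2].
  by apply: (disj_pre _ H1); exists pi.
Qed.

Lemma cut_occ t p pre c :
  valid t p -> (pickle (pre ++ p), clsf c p) \in occ_c c (cut t p pre).
Proof.
elim: p t pre c => [|b p IH] [v|l r] pre c //=; rewrite ?cats0 ?inE //.
case: b => /= Hv; rewrite mem_cat -cat_rcons IH ?orbT //.
Qed.

Lemma swap_occ x y c t :
  occ_c c (swap_term x y t) = map (fun o => (swap_var x y o.1, o.2)) (occ_c c t).
Proof.
rewrite /swap_term; elim: t c => [v|a IHa b IHb] c //=.
by rewrite map_cat -IHa -IHb.
Qed.

Lemma swap_varK x y : involutive (swap_var x y).
Proof.
move=> v; rewrite /swap_var.
case: (eqVneq v x) => [->|Hx]; first by case: (eqVneq y x) => [->|]; rewrite ?eqxx.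
case: (eqVneq v y) => [->|Hy]; first by rewrite eqxx.
by rewrite (negbTE Hx) (negbTE Hy).
Qed.

Lemma uniq_fst_cls (s : seq (nat * cls)) a j k :
  uniq (map fst s) -> (a, j) \in s -> (a, k) \in s -> j = k.
Proof.
elim: s => [|[b m] s IH] //= /andP [Hn Hu]; rewrite !in_cons.
case/orP => [/eqP [Ha Hj]|Hj]; case/orP => [/eqP [Ha' Hk]|Hk].
- by rewrite Hj Hk.
- by move/(map_f fst): Hk => /=; rewrite Ha (negbTE Hn).
- by move/(map_f fst): Hj => /=; rewrite Ha' (negbTE Hn).
- exact: IH.
Qed.

Lemma swap_perm x y k (s : seq (nat * cls)) :
  uniq (map fst s) -> (x, k) \in s -> (y, k) \in s ->
  perm_eq s (map (fun o => (swap_var x y o.1, o.2)) s).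
Proof.
set f := fun o : nat * cls => (swap_var x y o.1, o.2).
have fK : involutive f by move=> [v c]; rewrite /f /= swap_varK.
move=> Hu Hx Hy; apply: uniq_perm.
- exact: map_uniq Hu.
- by rewrite map_inj_uniq ?(map_uniq Hu) //; apply: inv_inj.
move=> [v j]; rewrite -{2}(fK (v, j)) (mem_map (inv_inj fK)) /f /= /swap_var.
case: (eqVneq v x) => [->|Hvx].
  apply/idP/idP => H.
  + by rewrite (uniq_fst_cls Hu H Hx).
  + by rewrite (uniq_fst_cls Hu H Hy).
case: (eqVneq v y) => [->|Hvy] //.
apply/idP/idP => H.
+ by rewrite (uniq_fst_cls Hu H Hy).
+ by rewrite (uniq_fst_cls Hu H Hx).
Qed.

Lemma interchange_Sigma P x y k :
  linear_term P -> (x, k) \in occ P -> (y, k) \in occ P ->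
  Sigma P (swap_term x y P).
Proof.
move=> HP Hx Hy; apply: data_Sigma; rewrite /occ swap_occ.
apply: swap_perm Hx Hy; by rewrite -vars_occ.
Qed.

Lemma subst_subst s s' t : subst s (subst s' t) = subst (fun v => subst s (s' v)) t.
Proof. by elim: t => //= a -> b ->. Qed.

Lemma RS A B p q :
  valid A p -> valid B q -> clsf (true, false) p = clsf (false, true) q ->
  ec (Op A B) (Op (repl A p (sub B q)) (repl B q (sub A p))).
Proof.
move=> HA HB Hc.
set X := pickle (false :: p); set Y := pickle (true :: q).
set P := Op (cut A p [:: false]) (cut B q [:: true]).
set s0 := fun n => sub (Op A B) (odflt [::] (unpickle n)).
have s0E pi : s0 (pickle pi) = sub (Op A B) pi by rewrite /s0 pickleK.
have H1 : subst s0 P = Op A B.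
  rewrite /= (@cut_subst _ _ _ _ (sub A p)) ?(@cut_subst _ _ _ _ (sub B q)) ?repl_sub //.
  all: try (by move=> pi _; rewrite s0E); try (by rewrite s0E).
have XY : X != Y by apply/eqP => /pk_inj.
have H2 : subst s0 (swap_term X Y P) = Op (repl A p (sub B q)) (repl B q (sub A p)).
  rewrite /swap_term subst_subst /=.
  rewrite (@cut_subst _ _ _ _ (sub B q)) ?(@cut_subst _ _ _ _ (sub A p)) //.
  - by rewrite /= /swap_var eq_sym (negbTE XY) eqxx s0E.
  - move=> pi Hpi; rewrite /swap_var.
    have -> : (pickle ([:: true] ++ pi) == X) = false.
      by apply/negbTE/eqP => /pk_inj.
    have -> : (pickle ([:: true] ++ pi) == Y) = false.
      by apply/negbTE/eqP => /pk_inj [] /eqP; rewrite (negbTE Hpi).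
    by rewrite s0E.
  - by rewrite /= /swap_var eqxx s0E.
  - move=> pi Hpi; rewrite /swap_var.
    have -> : (pickle ([:: false] ++ pi) == X) = false.
      by apply/negbTE/eqP => /pk_inj [] /eqP; rewrite (negbTE Hpi).
    have -> : (pickle ([:: false] ++ pi) == Y) = false.
      by apply/negbTE/eqP => /pk_inj.
    by rewrite s0E.
have Hlin : linear_term P.
  rewrite /linear_term /= cat_uniq !uniq_cut andbT /=.
  apply/hasPn => x /cut_vars [p2 H2x]; apply/negP => /cut_vars [p1 H1x].
  by apply: (@disj_pre [::] x); [exists p1 | exists p2].
have HX : (X, clsf (true, false) p) \in occ P.
  by rewrite /occ /= mem_cat (cut_occ [:: false] (true, false) HA).
have HY : (Y, clsf (true, false) p) \in occ P.
  by rewrite /occ /= mem_cat Hc (cut_occ [:: true] (false, true) HB) orbT.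
rewrite -{1}H1 -H2; apply: ec_ax; split; last exact: interchange_Sigma Hlin HX HY.
exists X, Y; split => //.
- by rewrite (vars_occ c00); apply: (map_f fst HX).
- by rewrite (vars_occ c00); apply: (map_f fst HY).
Qed.

Fixpoint tsize (t : term) : nat :=
  match t with Var _ => 1 | Op a b => tsize a + tsize b end.
Definition is_var (t : term) : bool := if t is Var _ then true else false.
Definition lc c t : seq cls := map snd (occ_c c t).
Fixpoint ic (c : cls) (t : term) : seq cls :=
  match t with Var _ => [::] | Op a b => c :: ic (shL c) a ++ ic (shR c) b end.
Definition kx (f : cls) : cls := (~~ f.1, ~~ f.2).

Lemma tsize_gt0 t : 0 < tsize t.
Proof. by elim: t => //= a Ha b Hb; rewrite addn_gt0 Ha. Qed.

Lemma tsize_occ c t : size (occ_c c t) = tsize t.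
Proof. by elim: t c => //= a IHa b IHb c; rewrite size_cat IHa IHb. Qed.

Lemma tsize_repl t p u :
  valid t p -> tsize (repl t p u) + tsize (sub t p) = tsize t + tsize u.
Proof.
elim: p t => [|[] p IH] [v|l r] //= Hv; try by rewrite addnC.
- by rewrite -addnA IH // addnA.
- by rewrite addnAC IH // addnAC.
Qed.

Lemma occ_path c t v k :
  (v, k) \in occ_c c t -> exists p, [/\ valid t p, sub t p = Var v & clsf c p = k].
Proof.
elim: t c => [w|a IHa b IHb] c /=.
  by rewrite inE => /eqP [-> ->]; exists [::].
rewrite mem_cat => /orP [/IHa|/IHb] [p [H1 H2 H3]].
- by exists (false :: p).
- by exists (true :: p).
Qed.

Lemma ic_path c t k :
  k \in ic c t -> exists p a b, [/\ valid t p, sub t p = Op a b & clsf c p = k].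
Proof.
elim: t c => [w|a IHa b IHb] c //=.
rewrite inE => /orP [/eqP ->|]; first by exists [::], a, b.
rewrite mem_cat => /orP [/IHa|/IHb] [p [a' [b' [H1 H2 H3]]]].
- by exists (false :: p), a', b'.
- by exists (true :: p), a', b'.
Qed.

Lemma SC c t k : all (pred1 k) (lc c t) -> is_var t /\ c = k.
Proof.
elim: t c => [w|a IHa b IHb] c /=; first by rewrite andbT => /eqP.
rewrite /lc /= map_cat all_cat => /andP [/IHa [Ha Ea] /IHb [Hb Eb]].
by move: Ea Eb; case: c => [[] []] /= <-.
Qed.

Lemma IP c t k : k \in ic c t -> [\/ k = c, shL k \in ic c t | shR k \in ic c t].
Proof.
elim: t c => [w|a IHa b IHb] c //=.
rewrite !inE !mem_cat => /orP [/eqP ->|/orP [/IHa [->|H|H]|/IHb [->|H|H]]].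
- by constructor 1.
- by constructor 2; rewrite /shL /= negbK -surjective_pairing eqxx.
- by constructor 2; rewrite H orbT.
- by constructor 3; rewrite H orbT.
- by constructor 3; rewrite /shR /= negbK -surjective_pairing eqxx.
- by constructor 2; rewrite H !orbT.
- by constructor 3; rewrite H !orbT.
Qed.

Lemma headic f t : f \notin ic f t -> is_var t.
Proof. by case: t => //= a b; rewrite inE eqxx. Qed.

Lemma kx_neq f : (f == kx f) = false.
Proof. by case: f => [[] []]. Qed.

Lemma ZL1 c f : (shL c == kx f) -> (shR c == f).
Proof. by case: c f => [[] []] [[] []]. Qed.
Lemma ZL2 c f : (shR c == kx f) -> (shL c == f).
Proof. by case: c f => [[] []] [[] []]. Qed.
Lemma ZL3 c f : ~~ ((shL c == kx f) && (shR c == kx f)).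
Proof. by case: c f => [[] []] [[] []]. Qed.

Lemma Z f c t : f \notin ic c t ->
  count_mem (kx f) (lc c t) <= count_mem f (lc c t) + (is_var t && (c == kx f)).
Proof.
elim: t c => [w|a IHa b IHb] c /=.
  by move=> _; rewrite /= !addn0 leq_addl.
rewrite inE mem_cat !negb_or => /and3P [Hc Ha Hb].
rewrite /lc /= map_cat !count_cat addn0.
have := IHa _ Ha; have := IHb _ Hb.
have L1 := @ZL1 c f; have L2 := @ZL2 c f; have L3 := @ZL3 c f.
case E1: (shL c == kx f); case E2: (shR c == kx f); rewrite /= ?andbF ?addn0.
- by move: L3; rewrite E1 E2.
- move/eqP: (L1 E1) => Ef; move: Hb; rewrite Ef => /headic; case: b IHb => [vb _ _ /=|//].
  rewrite kx_neq eqxx /lc !andbT => _ Ha'; lia.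
- move/eqP: (L2 E2) => Ef; move: Ha; rewrite Ef => /headic; case: a IHa => [va _ _ /=|//].
  rewrite kx_neq eqxx /lc !andbT => Hb' _.
  rewrite /= add0n addn0 add1n; apply: (leq_trans Hb'); by rewrite -addn1 leq_add2l leq_b1.
- by move=> H1 H2; apply: leq_add.
Qed.

Definition c10 : cls := (true, false).
Definition c01 : cls := (false, true).
Definition c11 : cls := (true, true).

Lemma lc_Op c A B : lc c (Op A B) = lc (shL c) A ++ lc (shR c) B.
Proof. by rewrite /lc /= map_cat. Qed.

Lemma avoid3 c t j : (c == c10) || (c == c01) -> (j == c00) || (j == c11) ->
  c10 \notin lc c t -> c01 \notin lc c t -> j \notin lc c t -> False.
Proof.
move=> Hc Hj N1 N2 N3.
have : all (pred1 (kx j)) (lc c t).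
  apply/allP => k Hk /=.
  have K1 : k != c10 by apply: contraNneq N1 => <-.
  have K2 : k != c01 by apply: contraNneq N2 => <-.
  have K3 : k != j by apply: contraNneq N3 => <-.
  move: K1 K2 K3 Hj; clear; case: k j => [[] []] [[] []] //.
move/SC => [_ E]; move: Hc Hj; rewrite E; clear; case: j => [[] []] //.
Qed.

Lemma do_moveL A B k : k \in ic c10 A -> k \in lc c01 B ->
  exists A' B', ec (Op A B) (Op A' B') /\ tsize A' < tsize A.
Proof.
move=> /ic_path [p [a [b [Hp Hs Hc]]]] /mapP [[v k'] /= Ho Ek]; subst k'.
have [q [Hq Hs' Hc']] := occ_path Ho.
exists (repl A p (sub B q)), (repl B q (sub A p)); split.
  by apply: RS => //; rewrite Hc Hc'.
have := tsize_repl (sub B q) Hp; rewrite Hs Hs' /=.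
have := tsize_gt0 a; have := tsize_gt0 b; lia.
Qed.

Lemma do_moveR A B k : k \in ic c01 B -> k \in lc c10 A ->
  exists A' B', ec (Op A B) (Op A' B') /\ tsize B' < tsize B.
Proof.
move=> /ic_path [q [a [b [Hq Hs Hc]]]] /mapP [[v k'] /= Ho Ek]; subst k'.
have [p [Hp Hs' Hc']] := occ_path Ho.
exists (repl A p (sub B q)), (repl B q (sub A p)); split.
  by apply: RS => //; rewrite Hc Hc'.
have := tsize_repl (sub A p) Hq; rewrite Hs Hs' /=.
have := tsize_gt0 a; have := tsize_gt0 b; lia.
Qed.

Lemma moveL A1 A2 B :
  0 < count_mem c10 (lc c00 (Op (Op A1 A2) B)) ->
  count_mem c01 (lc c00 (Op (Op A1 A2) B)) <= count_mem c10 (lc c00 (Op (Op A1 A2) B)) ->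
  exists A' B', ec (Op (Op A1 A2) B) (Op A' B') /\ tsize A' < tsize (Op A1 A2).
Proof.
set A := Op A1 A2 => H1 H2.
case Hh: (has (fun k => k \in lc c01 B) (ic c10 A)).
  by move/hasP: Hh => [k Hk HkB]; exact: do_moveL Hk HkB.
exfalso; move/hasPn: Hh => N.
have B10 : c10 \notin lc c01 B by apply: N; rewrite inE eqxx.
have EL : lc c00 (Op A B) = lc c10 A ++ lc c01 B by rewrite lc_Op.
rewrite EL !count_cat (count_memPn B10) addn0 in H1 H2.
case H01: (c01 \in ic c10 A).
  have N01 := N _ H01.
  case: (IP H01) => [//|Hj|Hj]; first exact: (avoid3 (c := c01) (j := c11) isT isT B10 N01 (N _ Hj)).
  exact: (avoid3 (c := c01) (j := c00) isT isT B10 N01 (N _ Hj)).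
have := Z (negbT H01); rewrite /= addn0 (_ : kx c01 = c10) // => HZ.
have B01 : c01 \notin lc c01 B.
  apply/count_memPn; move: H2 HZ => h1 h2; have := leq_trans h1 h2.
  by rewrite -{2}[count_mem c01 (lc c10 A)]addn0 leq_add2l leqn0 => /eqP.
move: H1 N B10 B01; rewrite /A; clear.
case: A1 => [x1|a1 a2]; case: A2 => [x2|b1 b2] => //= H1 N B10 B01.
- exact: (avoid3 (c := c01) (j := c11) isT isT B10 B01 (N c11 isT)).
- exact: (avoid3 (c := c01) (j := c00) isT isT B10 B01 (N c00 isT)).
- exact: (avoid3 (c := c01) (j := c00) isT isT B10 B01 (N c00 isT)).
Qed.

Lemma moveR A B1 B2 :
  0 < count_mem c01 (lc c00 (Op A (Op B1 B2))) ->
  count_mem c10 (lc c00 (Op A (Op B1 B2))) <= count_mem c01 (lc c00 (Op A (Op B1 B2))) ->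
  exists A' B', ec (Op A (Op B1 B2)) (Op A' B') /\ tsize B' < tsize (Op B1 B2).
Proof.
set B := Op B1 B2 => H1 H2.
case Hh: (has (fun k => k \in lc c10 A) (ic c01 B)).
  by move/hasP: Hh => [k Hk HkA]; exact: do_moveR Hk HkA.
exfalso; move/hasPn: Hh => N.
have A01 : c01 \notin lc c10 A by apply: N; rewrite inE eqxx.
have EL : lc c00 (Op A B) = lc c10 A ++ lc c01 B by rewrite lc_Op.
rewrite EL !count_cat (count_memPn A01) add0n in H1 H2.
case H10: (c10 \in ic c01 B).
  have N10 := N _ H10.
  case: (IP H10) => [//|Hj|Hj]; first exact: (avoid3 (c := c10) (j := c00) isT isT N10 A01 (N _ Hj)).
  exact: (avoid3 (c := c10) (j := c11) isT isT N10 A01 (N _ Hj)).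
have := Z (negbT H10); rewrite /= addn0 (_ : kx c10 = c01) // => HZ.
have A10 : c10 \notin lc c10 A.
  apply/count_memPn; move: H2 HZ => h1 h2; have := leq_trans h1 h2.
  by rewrite addnC -{2}[count_mem c10 (lc c01 B)]addn0 leq_add2l leqn0 => /eqP.
move: H1 N A10 A01; rewrite /B; clear.
case: B1 => [x1|a1 a2]; case: B2 => [x2|b1 b2] => //= H1 N A10 A01.
- exact: (avoid3 (c := c10) (j := c00) isT isT A10 A01 (N c00 isT)).
- exact: (avoid3 (c := c10) (j := c11) isT isT A10 A01 (N c11 isT)).
- exact: (avoid3 (c := c10) (j := c11) isT isT A10 A01 (N c11 isT)).
Qed.

Lemma moveC A1 A2 B :
  ~~ (is_var A1 && is_var A2) ->
  count_mem c10 (lc c00 (Op (Op A1 A2) B)) = 0 ->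
  count_mem c01 (lc c00 (Op (Op A1 A2) B)) = 0 ->
  exists A' B', ec (Op (Op A1 A2) B) (Op A' B') /\ tsize A' < tsize (Op A1 A2).
Proof.
set A := Op A1 A2 => Hv H1 H2.
case Hh: (has (fun k => k \in lc c01 B) (ic c10 A)).
  by move/hasP: Hh => [k Hk HkB]; exact: do_moveL Hk HkB.
exfalso; move/hasPn: Hh => N.
have EL : lc c00 (Op A B) = lc c10 A ++ lc c01 B by rewrite lc_Op.
rewrite EL !count_cat in H1 H2.
have B10 : c10 \notin lc c01 B by apply/count_memPn; lia.
have B01 : c01 \notin lc c01 B by apply/count_memPn; lia.
move: Hv N B10 B01; rewrite /A; clear.
case: A1 => [x1|a1 a2]; case: A2 => [x2|b1 b2] => //= _ N B10 B01.
- exact: (avoid3 (c := c01) (j := c11) isT isT B10 B01 (N c11 isT)).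
- exact: (avoid3 (c := c01) (j := c00) isT isT B10 B01 (N c00 isT)).
- exact: (avoid3 (c := c01) (j := c00) isT isT B10 B01 (N c00 isT)).
Qed.

Definition cnt k t := count_mem k (lc c00 t).

Lemma ec_occ t u : ec t u -> perm_eq (occ t) (occ u).
Proof. by move=> H; apply: Sigma_data; apply: soundness. Qed.

Lemma ec_cnt k t u : ec t u -> cnt k t = cnt k u.
Proof.
move=> H; have := perm_map snd (ec_occ H).
by move/permP => /(_ (pred1 k)).
Qed.

Lemma ec_size t u : ec t u -> tsize t = tsize u.
Proof. by move=> H; rewrite -(tsize_occ c00) -(tsize_occ c00 u); apply: perm_size (ec_occ H). Qed.

Lemma K1 n : forall A B, tsize A <= n -> 0 < cnt c10 (Op A B) ->
  cnt c01 (Op A B) <= cnt c10 (Op A B) -> exists x R, ec (Op A B) (Op (Var x) R).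
Proof.
elim: n => [|n IH] A B HA H1 H2; first by have := tsize_gt0 A; lia.
case: A HA H1 H2 => [x|A1 A2] HA H1 H2; first by exists x, B; apply: ec_refl.
have [A' [B' [He Hs]]] := moveL H1 H2.
have [|||x [R He']] := IH A' B'.
- by move: Hs HA => /=; lia.
- by rewrite -(ec_cnt _ He).
- by rewrite -!(ec_cnt _ He).
by exists x, R; apply: ec_trans He He'.
Qed.

Lemma K2 n : forall A B, tsize B <= n -> 0 < cnt c01 (Op A B) ->
  cnt c10 (Op A B) <= cnt c01 (Op A B) -> exists x R, ec (Op A B) (Op R (Var x)).
Proof.
elim: n => [|n IH] A B HB H1 H2; first by have := tsize_gt0 B; lia.
case: B HB H1 H2 => [x|B1 B2] HB H1 H2; first by exists x, A; apply: ec_refl.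
have [A' [B' [He Hs]]] := moveR H1 H2.
have [|||x [R He']] := IH A' B'.
- by move: Hs HB => /=; lia.
- by rewrite -(ec_cnt _ He).
- by rewrite -!(ec_cnt _ He).
by exists x, R; apply: ec_trans He He'.
Qed.

Lemma K3 n : forall A B, tsize A <= n -> cnt c10 (Op A B) = 0 ->
  cnt c01 (Op A B) = 0 -> exists x y R, ec (Op A B) (Op (Op (Var x) (Var y)) R).
Proof.
elim: n => [|n IH] A B HA H1 H2; first by have := tsize_gt0 A; lia.
case: A HA H1 H2 => [x|A1 A2] HA H1 H2; first by rewrite /cnt /lc /= in H1.
case Hv: (is_var A1 && is_var A2).
  case: A1 A2 Hv {HA H1 H2} => [x|??] [y|??] // _.
  by exists x, y, B; apply: ec_refl.
have [A' [B' [He Hs]]] := moveC (negbT Hv) H1 H2.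
have [|||x [y [R He']]] := IH A' B'.
- by move: Hs HA => /=; lia.
- by rewrite -(ec_cnt _ He).
- by rewrite -(ec_cnt _ He).
by exists x, y, R; apply: ec_trans He He'.
Qed.

Definition shk (c : cls) (o : nat * cls) : nat * cls :=
  (o.1, (c.1 (+) o.2.1, c.2 (+) o.2.2)).

Lemma occ_c_shift c d t :
  occ_c (c.1 (+) d.1, c.2 (+) d.2) t = map (shk c) (occ_c d t).
Proof.
elim: t d => [v|a IHa b IHb] d //=.
rewrite map_cat -IHa -IHb /shL /shR /= !addbN //.
Qed.

Lemma occ_cancel c R S : perm_eq (occ_c c R) (occ_c c S) -> perm_eq (occ R) (occ S).
Proof.
have E t : occ_c c t = map (shk c) (occ t).
  by rewrite /occ -occ_c_shift /= !addbF -surjective_pairing.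
have K : involutive (shk c).
  by move=> [v [l r]]; rewrite /shk /= !addbA !addbb.
rewrite !E => /(perm_map (shk c)); by rewrite !(mapK K).
Qed.

Lemma matchL x y S R : perm_eq (occ (Op (Var x) R)) (occ (Op (Var y) S)) ->
  exists S', ec (Op (Var y) S) (Op (Var x) S').
Proof.
case: (eqVneq x y) => [->|Hxy] Hp; first by exists S; apply: ec_refl.
have : (x, c10) \in occ (Op (Var y) S) by rewrite -(perm_mem Hp) /occ /= inE eqxx.
rewrite /occ /= inE => /orP [/eqP [E]|Ho]; first by rewrite E eqxx in Hxy.
have [q [Hq Hs Hc]] := occ_path Ho.
have := @RS (Var y) S [::] q isT Hq (esym Hc); rewrite Hs /= => H.
by eexists; apply: H.
Qed.

Lemma matchR x y S R : perm_eq (occ (Op R (Var x))) (occ (Op S (Var y))) ->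
  exists S', ec (Op S (Var y)) (Op S' (Var x)).
Proof.
case: (eqVneq x y) => [->|Hxy] Hp; first by exists S; apply: ec_refl.
have : (x, c01) \in occ (Op S (Var y)).
  by rewrite -(perm_mem Hp) /occ /= mem_cat inE eqxx orbT.
rewrite /occ /= mem_cat inE => /orP [Ho|/eqP [E]]; last by rewrite E eqxx in Hxy.
have [q [Hq Hs Hc]] := occ_path Ho.
have := @RS S (Var y) q [::] Hq isT Hc; rewrite Hs /= => H.
by eexists; apply: H.
Qed.

Lemma matchC1 x1 X2 y1 y2 S R :
  perm_eq (occ (Op (Op (Var x1) X2) R)) (occ (Op (Op (Var y1) (Var y2)) S)) ->
  exists S', ec (Op (Op (Var y1) (Var y2)) S) (Op (Op (Var x1) (Var y2)) S').
Proof.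
case: (eqVneq x1 y1) => [->|Hxy] Hp; first by exists S; apply: ec_refl.
have : (x1, c00) \in occ (Op (Op (Var y1) (Var y2)) S).
  by rewrite -(perm_mem Hp) /occ /= inE eqxx.
rewrite /occ /= !in_cons => /orP [/eqP [E]|/orP [/eqP []|Ho]] //.
  by rewrite E eqxx in Hxy.
have [q [Hq Hs Hc]] := occ_path Ho.
have := @RS (Op (Var y1) (Var y2)) S [:: false] q isT Hq (esym Hc); rewrite Hs /= => H.
by eexists; apply: H.
Qed.

Lemma matchC2 x1 x2 y2 S R :
  perm_eq (occ (Op (Op (Var x1) (Var x2)) R)) (occ (Op (Op (Var x1) (Var y2)) S)) ->
  exists S', ec (Op (Op (Var x1) (Var y2)) S) (Op (Op (Var x1) (Var x2)) S').
Proof.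
case: (eqVneq x2 y2) => [->|Hxy] Hp; first by exists S; apply: ec_refl.
have : (x2, c11) \in occ (Op (Op (Var x1) (Var y2)) S).
  by rewrite -(perm_mem Hp) /occ /= !inE eqxx orbT.
rewrite /occ /= !in_cons => /orP [/eqP []|/orP [/eqP [E]|Ho]] //.
  by rewrite E eqxx in Hxy.
have [q [Hq Hs Hc]] := occ_path Ho.
have := @RS (Op (Var x1) (Var y2)) S [:: true] q isT Hq (esym Hc); rewrite Hs /= => H.
by eexists; apply: H.
Qed.

Lemma cnt_perm k t u : perm_eq (occ t) (occ u) -> cnt k t = cnt k u.
Proof. by move=> H; have := perm_map snd H; move/permP => /(_ (pred1 k)). Qed.

Lemma main n : forall t u, tsize t <= n -> perm_eq (occ t) (occ u) -> ec t u.
Proof.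
elim: n => [|n IH] t u Ht Hp; first by have := tsize_gt0 t; lia.
have Hsz : tsize u = tsize t.
  by rewrite -(tsize_occ c00) -(tsize_occ c00 t); apply/esym/perm_size.
case: t Ht Hp Hsz => [v|A B] Ht Hp Hsz.
  case: u Hp Hsz => [w|A' B'] Hp Hsz; last first.
    by move: Hsz => /=; have := tsize_gt0 A'; have := tsize_gt0 B'; lia.
  move: Hp => /perm_mem/(_ (v, c00)); rewrite /occ /= !inE eqxx => /esym/eqP [->].
  exact: ec_refl.
case: u Hp Hsz => [w|A' B'] Hp Hsz.
  by move: Hsz => /=; have := tsize_gt0 A; have := tsize_gt0 B; lia.
have C1 k := cnt_perm k Hp.
have fin : forall t1 u1, ec (Op A B) t1 -> ec (Op A' B') u1 -> ec t1 u1 -> ec (Op A B) (Op A' B').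
  move=> t1 u1 H1 H2 H3; apply: ec_trans H1 _; apply: ec_trans H3 _; exact: ec_sym.
case H10: ((0 < cnt c10 (Op A B)) && (cnt c01 (Op A B) <= cnt c10 (Op A B))).
  move/andP: H10 => [h1 h2].
  have [x [R Ht1]] := K1 (leqnn _) h1 h2.
  have [y [S Hu1]] : exists y S, ec (Op A' B') (Op (Var y) S).
    by apply: K1 (leqnn _) _ _; rewrite -!C1.
  have P1 : perm_eq (occ (Op (Var x) R)) (occ (Op (Var y) S)).
    apply: perm_trans (perm_trans (ec_occ (ec_sym Ht1)) Hp) (ec_occ Hu1).
  have [S' HS] := matchL P1.
  have P2 : perm_eq (occ (Op (Var x) R)) (occ (Op (Var x) S')) := perm_trans P1 (ec_occ HS).
  apply: (fin _ _ Ht1 Hu1); apply: ec_trans (ec_sym HS).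
  apply: ec_cong; first exact: ec_refl.
  apply: IH; last by apply: (occ_cancel (c := c01)); move: P2; rewrite /occ /= perm_cons.
  by have := ec_size Ht1; move: Ht => /=; lia.
case H01: ((0 < cnt c01 (Op A B)) && (cnt c10 (Op A B) <= cnt c01 (Op A B))).
  move/andP: H01 => [h1 h2].
  have [x [R Ht1]] := K2 (leqnn _) h1 h2.
  have [y [S Hu1]] : exists y S, ec (Op A' B') (Op S (Var y)).
    by apply: K2 (leqnn _) _ _; rewrite -!C1.
  have P1 : perm_eq (occ (Op R (Var x))) (occ (Op S (Var y))).
    apply: perm_trans (perm_trans (ec_occ (ec_sym Ht1)) Hp) (ec_occ Hu1).
  have [S' HS] := matchR P1.
  have P2 : perm_eq (occ (Op R (Var x))) (occ (Op S' (Var x))) := perm_trans P1 (ec_occ HS).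
  apply: (fin _ _ Ht1 Hu1); apply: ec_trans (ec_sym HS).
  apply: ec_cong; last exact: ec_refl.
  apply: IH; last by apply: (occ_cancel (c := c10)); move: P2; rewrite /occ /= perm_cat2r.
  by have := ec_size Ht1; move: Ht => /=; lia.
have h1 : cnt c10 (Op A B) = 0.
  by move: H10 H01; case: (cnt c10 (Op A B)) => // m; case: (cnt c01 (Op A B)) => //= *; lia.
have h2 : cnt c01 (Op A B) = 0.
  by move: H10 H01; rewrite h1 /=; case: (cnt c01 (Op A B)).
have [x1 [x2 [R Ht1]]] := K3 (leqnn _) h1 h2.
have [y1 [y2 [S Hu1]]] : exists y1 y2 S, ec (Op A' B') (Op (Op (Var y1) (Var y2)) S).
  by apply: K3 (leqnn _) _ _; rewrite -!C1.
have P1 : perm_eq (occ (Op (Op (Var x1) (Var x2)) R)) (occ (Op (Op (Var y1) (Var y2)) S)).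
  apply: perm_trans (perm_trans (ec_occ (ec_sym Ht1)) Hp) (ec_occ Hu1).
have [S1 HS1] := matchC1 P1.
have P2 := perm_trans P1 (ec_occ HS1).
have [S2 HS2] := matchC2 P2.
have P3 := perm_trans P2 (ec_occ HS2).
apply: (fin _ _ Ht1 Hu1); apply: ec_trans (ec_sym (ec_trans HS1 HS2)).
apply: ec_cong; first exact: ec_refl.
apply: IH; last by apply: (occ_cancel (c := c01)); move: P3; rewrite /occ /= !perm_cons.
by have := ec_size Ht1; move: Ht => /=; lia.
Qed.

Theorem lemma1p2 : is_basis Sigma_interchange Sigma.
Proof.
move=> p q; split; first exact: soundness.
by move/Sigma_data; apply: main (leqnn _).
Qed.
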